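(* For $\lambda>0$ and $\eta=(\sqrt{1/4+\lambda}-1/2)^{1/2}$, $$\sup_{x,y\in\mathbf{R}^3}|R_0^\pm(\lambda;x,y)|\lesssim\frac{\eta+\sqrt{1+\eta^2}}{1+2\eta^2},\qquad \sup_{x,y\in\mathbf{R}^3}\Big|\frac{d}{d\eta}R_0^\pm(\lambda;x,y)\Big|\lesssim\frac{1}{1+2\eta^2}.$$
   Context: $R_0^\pm(\lambda;x,y)$ is the kernel of $\lim_{\epsilon\downarrow0}(\Delta^2-\Delta-(\lambda\pm i\epsilon))^{-1}$ on $\mathbf{R}^3$: $R_0^\pm(\lambda;x,y)=\frac{1}{1+2\eta^2}\Big(\frac{e^{\pm i\eta|x-y|}}{4\pi|x-y|}-\frac{e^{-\sqrt{1+\eta^2}|x-y|}}{4\pi|x-y|}\Big)$, viewed as a function of $\eta$. *)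

(* Defs.v *)
From Stdlib Require Import Reals.
From Coquelicot Require Import Coquelicot.
Open Scope R_scope.

Definition R3 := (R * R * R)%type.

Definition dist3 (x y : R3) : R :=
  let '(x1, x2, x3) := x in let '(y1, y2, y3) := y in
  sqrt ((x1 - y1)^2 + (x2 - y2)^2 + (x3 - y3)^2).

Definition expi (t : R) : C := (cos t, sin t).

(* Sign: pm = true is R_0^+, pm = false is R_0^- *)
Definition sgn (pm : bool) : R := if pm then 1 else -1.

(* The kernel R_0^{pm}(lambda; x, y) as a function of eta:
     1/(1+2 eta^2) * ( e^{pm i eta r}/(4 pi r) - e^{-sqrt(1+eta^2) r}/(4 pi r) ),
   r = |x-y|.  On the diagonal r = 0 it is given its continuous extension
     (sqrt(1+eta^2) pm i eta) / (4 pi (1+2 eta^2)). *)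
Definition R0res (pm : bool) (eta : R) (x y : R3) : C :=
  let r := dist3 x y in
  let s := sgn pm in
  if Req_EM_T r 0 then
    Cdiv (Cplus (RtoC (sqrt (1 + eta^2))) (0, s * eta)) (RtoC (4 * PI * (1 + 2 * eta^2)))
  else
    Cmult (RtoC (/ (1 + 2 * eta^2)))
      (Cminus (Cdiv (expi (s * eta * r)) (RtoC (4 * PI * r)))
              (Cdiv (RtoC (exp (- sqrt (1 + eta^2) * r))) (RtoC (4 * PI * r)))).

Definition eta_of (lam : R) : R := sqrt (sqrt (1/4 + lam) - 1/2).

(* Main.v *)
Require Import Defs.
From Stdlib Require Import Reals Lra.
From Coquelicot Require Import Coquelicot.
Open Scope R_scope.


Lemma sin_abs y : Rabs (sin y) <= Rabs y.
Proof.
  replace (sin y) with (sin y - sin 0) by (rewrite sin_0; ring).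
  replace (Rabs y) with (1 * Rabs (y - 0)) by (rewrite Rminus_0_r; ring).
  apply bounded_variation with (dh := cos).
  intros t _. split. auto_derive; auto; ring.
  apply Rabs_le; pose proof (COS_bound t); lra.
Qed.

Lemma cos_abs y : Rabs (cos y - 1) <= Rabs y.
Proof.
  replace (cos y - 1) with (cos y - cos 0) by (rewrite cos_0; ring).
  replace (Rabs y) with (1 * Rabs (y - 0)) by (rewrite Rminus_0_r; ring).
  apply bounded_variation with (dh := fun t => - sin t).
  intros t _. split. auto_derive; auto; ring.
  rewrite Rabs_Ropp; apply Rabs_le; pose proof (SIN_bound t); lra.
Qed.

Lemma Cmod_le (a b : R) : Cmod (a, b) <= Rabs a + Rabs b.
Proof.
  unfold Cmod; simpl.
  rewrite <- (sqrt_pow2 (Rabs a + Rabs b)) by (pose proof (Rabs_pos a); pose proof (Rabs_pos b); lra).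
  apply sqrt_le_1_alt.
  rewrite <- (pow2_abs a) at 1. rewrite <- (pow2_abs b) at 1.
  pose proof (Rabs_pos a); pose proof (Rabs_pos b); nra.
Qed.

Lemma is_derive_C (u v : R -> R) (x u' v' : R) :
  is_derive u x u' -> is_derive v x v' ->
  @is_derive R_AbsRing C_R_NormedModule (fun t => ((u t, v t) : C)) x ((u', v') : C).
Proof.
  intros Hu Hv.
  pose proof (@is_derive_plus R_AbsRing C_R_NormedModule _ _ x _ _
     (@is_derive_scal_l R_AbsRing C_R_NormedModule u x u' ((1,0):C) Hu)
     (@is_derive_scal_l R_AbsRing C_R_NormedModule v x v' ((0,1):C) Hv)) as H.
  replace ((u', v') : C) with (@plus (NormedModule.AbelianMonoid _ C_R_NormedModule) (@scal R_Ring (NormedModule.ModuleSpace _ C_R_NormedModule) u' ((1,0):C)) (@scal R_Ring (NormedModule.ModuleSpace _ C_R_NormedModule) v' ((0,1):C))).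
  2:{ change (((u'*1 + v'*0), (u'*0 + v'*1)) = (u', v')). f_equal; ring. }
  eapply is_derive_ext; [| exact H].
  intros t. change (((u t*1 + v t*0), (u t*0 + v t*1)) = (u t, v t)). f_equal; ring.
Qed.

Lemma divbnd (X c r P D : R) : 0 < r -> 1 <= P -> 1 <= D -> Rabs X <= c * r * D ->
  Rabs (X / (P * r * D^2)) <= c / D.
Proof.
  intros Hr HP HD HX.
  assert (0 < P * r * D^2) by (apply Rmult_lt_0_compat; [nra| nra]).
  rewrite Rabs_div by lra. rewrite (Rabs_pos_eq (P*r*D^2)) by lra.
  apply Rle_div_l; [lra|].
  assert (0 <= c) by (pose proof (Rabs_pos X); assert (0 < r*D) by nra; nra).
  unfold Rdiv. replace (c * / D * (P*r*D^2)) with (c * r * D * P) by (field; lra).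
  assert (0 <= c*r*D) by (apply Rmult_le_pos; nra). nra.
Qed.

Lemma divbnd1 (X c r P D : R) : 0 < r -> 1 <= P -> 1 <= D -> Rabs X <= c * r ->
  Rabs (X / (P * r * D)) <= c / D.
Proof.
  intros Hr HP HD HX.
  assert (0 < P * r * D) by (apply Rmult_lt_0_compat; [nra| nra]).
  rewrite Rabs_div by lra. rewrite (Rabs_pos_eq (P*r*D)) by lra.
  apply Rle_div_l; [lra|].
  assert (0 <= c) by (pose proof (Rabs_pos X); nra).
  unfold Rdiv. replace (c * / D * (P*r*D)) with (c * r * P) by (field; lra).
  assert (0 <= c*r) by nra. nra.
Qed.

Lemma PI_gt1 : 1 <= 4 * PI.
Proof. pose proof PI2_3_2. lra. Qed.

Lemma R0res_zero pm e x y : dist3 x y = 0 ->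
  R0res pm e x y = ((sqrt (1+e^2) * 1 - 0 * 0) / (4*PI*1*(1+2*e^2)), (sgn pm * e) / (4*PI*1*(1+2*e^2))).
Proof.
  intros H. unfold R0res. destruct (Req_EM_T (dist3 x y) 0); [|contradiction].
  pose proof PI_gt1. assert (0 < 1 + 2*e^2) by nra.
  unfold Cdiv, Cmult, Cinv, Cplus, RtoC; simpl. f_equal; field; nra.
Qed.

Lemma R0res_nz pm e x y : dist3 x y <> 0 ->
  let r := dist3 x y in let s := sgn pm in
  R0res pm e x y = ((cos (s*e*r) - exp (- sqrt (1+e^2) * r)) / (4*PI*r*(1+2*e^2)),
                    sin (s*e*r) / (4*PI*r*(1+2*e^2))).
Proof.
  intros H r s. unfold R0res. fold r. fold s. destruct (Req_EM_T r 0); [contradiction|].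
  pose proof PI_gt1. assert (0 < 1 + 2*e^2) by nra.
  unfold Cdiv, Cmult, Cinv, Cminus, Cplus, Copp, RtoC, expi; simpl. f_equal; field; split; try nra; lra.
Qed.

Lemma pos4 r D : 0 < r -> 0 < D -> 4*PI*r*D > 0.
Proof. intros. pose proof PI_gt1. assert (0 < 4*PI*r) by nra. nra. Qed.

Ltac nzc := repeat split; try lra; try (apply Rgt_not_eq; apply pos4; nra);
  try (apply Rgt_not_eq; apply Rmult_lt_0_compat; [lra | apply sqrt_lt_R0; nra]).

Ltac fin_der :=
  match goal with |- @eq ?T ?a ?b => change (@eq R a b) end;
  repeat match goal with |- context [sqrt (1 + ?e * (?e * 1))] =>
    replace (1 + e * (e*1)) with (1 + e^2) by ring end;
  field; nzc.

Lemma der_u1 (s r e : R) : 0 < r ->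
  is_derive (fun e => (cos (s*e*r) - exp (- sqrt (1+e^2) * r)) / (4*PI*r*(1+2*e^2))) e
   (((- sin (s*e*r) * (s*r) + exp (- sqrt (1+e^2) * r) * (e / sqrt (1+e^2) * r)) * (1+2*e^2)
     - (cos (s*e*r) - exp (- sqrt (1+e^2) * r)) * (4*e)) / (4*PI*r*(1+2*e^2)^2)).
Proof.
  intros Hr. pose proof PI_gt1. assert (0 < 1 + 2*e^2) by nra.
  assert (0 < sqrt (1+e^2)) by (apply sqrt_lt_R0; nra).
  auto_derive.
  - nzc.
  - fin_der.
Qed.

Lemma der_v1 (s r e : R) : 0 < r ->
  is_derive (fun e => sin (s*e*r) / (4*PI*r*(1+2*e^2))) e
   ((cos (s*e*r) * (s*r) * (1+2*e^2) - sin (s*e*r) * (4*e)) / (4*PI*r*(1+2*e^2)^2)).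
Proof.
  intros Hr. pose proof PI_gt1. assert (0 < 1 + 2*e^2) by nra.
  auto_derive.
  - nzc.
  - fin_der.
Qed.

Lemma der_u0 (e : R) :
  is_derive (fun e => (sqrt (1+e^2) * 1 - 0 * 0) / (4*PI*1*(1+2*e^2))) e
   (((e / sqrt (1+e^2)) * (1+2*e^2) - sqrt (1+e^2) * (4*e)) / (4*PI*1*(1+2*e^2)^2)).
Proof.
  pose proof PI_gt1. assert (0 < 1 + 2*e^2) by nra. assert (0 < 1) by lra.
  assert (0 < sqrt (1+e^2)) by (apply sqrt_lt_R0; nra).
  auto_derive.
  - nzc.
  - fin_der.
Qed.

Lemma der_v0 (s e : R) :
  is_derive (fun e => (s * e) / (4*PI*1*(1+2*e^2))) e
   ((s * (1+2*e^2) - s * e * (4*e)) / (4*PI*1*(1+2*e^2)^2)).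
Proof.
  pose proof PI_gt1. assert (0 < 1 + 2*e^2) by nra. assert (0 < 1) by lra.
  auto_derive.
  - nzc.
  - fin_der.
Qed.

Lemma comb A B r D e c1 c2 k : 0 < r -> 0 <= e -> 0 <= D -> Rabs A <= c1 -> Rabs B <= c2 * r ->
  4*e*c2 <= k*D -> Rabs (A*r*D - B*(4*e)) <= (c1 + k) * r * D.
Proof.
  intros Hr He HD HA HB Hk.
  unfold Rminus. eapply Rle_trans; [apply Rabs_triang|]. rewrite Rabs_Ropp.
  rewrite !Rabs_mult. rewrite (Rabs_pos_eq r), (Rabs_pos_eq D), (Rabs_pos_eq 4), (Rabs_pos_eq e) by lra.
  assert (0 <= r*D) by nra.
  assert (Rabs A * r * D <= c1 * r * D) by (rewrite !Rmult_assoc; apply Rmult_le_compat_r; lra).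
  assert (Rabs B * (4*e) <= c2 * r * (4*e)) by (apply Rmult_le_compat_r; lra).
  nra.
Qed.

Lemma abs_inv a c : Rabs a <= c -> -c <= a <= c.
Proof. unfold Rabs; destruct (Rcase_abs a); lra. Qed.

Lemma dist3_pos x y : 0 <= dist3 x y.
Proof. destruct x as [[x1 x2] x3]; destruct y as [[y1 y2] y3]; apply sqrt_pos. Qed.

Theorem lemma4p1 :
  exists K : R, 0 < K /\
  forall (pm : bool) (lam : R), 0 < lam ->
  let eta := eta_of lam in
  forall x y : R3,
    Cmod (R0res pm eta x y) <= K * ((eta + sqrt (1 + eta^2)) / (1 + 2 * eta^2)) /\
    exists d : C, is_derive (fun e : R => R0res pm e x y) eta d /\
                  Cmod d <= K * (1 / (1 + 2 * eta^2)).
Proof.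
  exists 10. split; [lra|]. intros pm lam Hlam eta x y.
  assert (He : 0 <= eta) by apply sqrt_pos. clearbody eta.
  assert (Hs : Rabs (sgn pm) = 1) by (destruct pm; simpl; [apply Rabs_R1| rewrite Rabs_left; lra]).
  set (s := sgn pm) in *.
  set (b := sqrt (1 + eta^2)).
  assert (Hb2 : b^2 = 1 + eta^2) by (apply pow2_sqrt; nra).
  assert (Hb : 0 < b) by (apply sqrt_lt_R0; nra).
  set (D := 1 + 2*eta^2).
  assert (HD : 1 <= D) by (unfold D; nra).
  assert (Heb : eta <= b) by nra.
  assert (Heb2 : 4*eta*b <= 2*D) by (unfold D; nra).
  assert (Hee : 4*eta*eta <= 2*D) by (unfold D; nra).
  assert (HQ : 0 <= (eta + b) / D) by (apply Rdiv_le_0_compat; lra).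
  assert (Hq : Rabs (eta / b) <= 1).
  { rewrite Rabs_pos_eq by (apply Rdiv_le_0_compat; lra). apply Rle_div_l; lra. }
  pose proof PI_gt1.
  destruct (Req_dec (dist3 x y) 0) as [H0|H0].
  - rewrite (R0res_zero pm eta x y H0). fold s. fold b. fold D. split.
    + eapply Rle_trans; [apply Cmod_le|].
      assert (Rabs ((b * 1 - 0 * 0) / (4 * PI * 1 * D)) <= b / D).
      { apply divbnd1; try lra. rewrite Rabs_pos_eq; lra. }
      assert (Rabs (s * eta / (4 * PI * 1 * D)) <= eta / D).
      { apply divbnd1; try lra. rewrite Rabs_mult, Hs, Rabs_pos_eq; lra. }
      assert (b / D + eta / D = (eta + b) / D) by (field; lra).
      lra.
    + eexists. split.
      * apply (is_derive_ext (fun t => (((sqrt (1+t^2) * 1 - 0 * 0) / (4*PI*1*(1+2*t^2)),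
                      (s * t) / (4*PI*1*(1+2*t^2))) : C))).
        { intros t. symmetry. apply R0res_zero; exact H0. }
        apply is_derive_C; [apply der_u0 | apply der_v0].
      * fold b. fold D. eapply Rle_trans; [apply Cmod_le|].
        assert (Rabs (((eta / b) * D - b * (4*eta)) / (4*PI*1*D^2)) <= 3 / D).
        { apply divbnd; try lra.
          replace ((eta / b) * D - b * (4*eta)) with ((eta/b)*1*D - b*(4*eta)) by ring.
          replace 3 with (1 + 2) by ring. apply comb with (c2 := b); try lra.
          rewrite Rabs_pos_eq; lra. }
        assert (Rabs ((s * D - s * eta * (4*eta)) / (4*PI*1*D^2)) <= 3 / D).
        { apply divbnd; try lra.
          replace (s * D - s * eta * (4*eta)) with (s*1*D - (s*eta)*(4*eta)) by ring.
          replace 3 with (1 + 2) by ring. apply comb with (c2 := eta); try lra.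
          rewrite Rabs_mult, Hs, Rabs_pos_eq; lra. }
        assert (3 / D + 3 / D <= 10 * (1 / D)).
        { unfold Rdiv. assert (0 < / D) by (apply Rinv_0_lt_compat; lra). lra. }
        lra.
  - assert (Hr : 0 < dist3 x y) by (pose proof (dist3_pos x y); lra).
    pose proof (R0res_nz pm eta x y H0) as ER. cbv zeta in ER. fold s in ER.
    set (r := dist3 x y) in *.
    rewrite ER. clear ER. fold b. fold D.
    set (E := exp (- b * r)).
    assert (HE0 : 0 < E) by apply exp_pos.
    assert (HE1 : E <= 1).
    { unfold E. rewrite <- exp_0. left. apply exp_increasing. nra. }
    assert (HE2 : 1 - b * r <= E).
    { unfold E. pose proof (exp_ineq1_le (- b * r)). lra. }
    assert (Hser : Rabs (s*eta*r) = eta * r).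
    { rewrite !Rabs_mult, Hs, (Rabs_pos_eq eta), (Rabs_pos_eq r); lra. }
    pose proof (cos_abs (s*eta*r)) as Hc. rewrite Hser in Hc. apply abs_inv in Hc.
    pose proof (sin_abs (s*eta*r)) as Hsn. rewrite Hser in Hsn.
    assert (HSS : Rabs (sin (s*eta*r)) <= 1) by (apply Rabs_le; pose proof (SIN_bound (s*eta*r)); lra).
    assert (HCC : Rabs (cos (s*eta*r)) <= 1) by (apply Rabs_le; pose proof (COS_bound (s*eta*r)); lra).
    assert (HB : Rabs (cos (s*eta*r) - E) <= (eta + b) * r).
    { apply Rabs_le. nra. }
    split.
    + eapply Rle_trans; [apply Cmod_le|].
      assert (Rabs ((cos (s*eta*r) - E) / (4 * PI * r * D)) <= (eta + b) / D).
      { apply divbnd1; lra. }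
      assert (Rabs (sin (s*eta*r) / (4 * PI * r * D)) <= eta / D).
      { apply divbnd1; lra. }
      assert (eta / D <= (eta + b) / D) by (unfold Rdiv; apply Rmult_le_compat_r; [left; apply Rinv_0_lt_compat|]; lra).
      lra.
    + eexists. split.
      * apply (is_derive_ext (fun t => (((cos (s*t*r) - exp (- sqrt (1+t^2) * r)) / (4*PI*r*(1+2*t^2)),
                      sin (s*t*r) / (4*PI*r*(1+2*t^2))) : C))).
        { intros t. symmetry. apply (R0res_nz pm t x y H0). }
        apply is_derive_C; [apply der_u1 | apply der_v1]; exact Hr.
      * fold b. fold D. fold E. eapply Rle_trans; [apply Cmod_le|].
        assert (Rabs (((- sin (s*eta*r) * (s*r) + E * (eta / b * r)) * D
                   - (cos (s*eta*r) - E) * (4*eta)) / (4*PI*r*D^2)) <= 6 / D).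
        { apply divbnd; try lra.
          replace ((- sin (s*eta*r) * (s*r) + E * (eta / b * r)) * D - (cos (s*eta*r) - E) * (4*eta))
            with ((- sin (s*eta*r) * s + E * (eta / b)) * r * D - (cos (s*eta*r) - E) * (4*eta)) by ring.
          replace 6 with (2 + 4) by ring. apply comb with (c2 := eta + b); try lra.
          eapply Rle_trans; [apply Rabs_triang|].
          rewrite !Rabs_mult, Rabs_Ropp, Hs, (Rabs_pos_eq E) by lra.
          assert (E * Rabs (eta / b) <= 1) by (pose proof (Rabs_pos (eta/b)); nra).
          lra. }
        assert (Rabs ((cos (s*eta*r) * (s*r) * D - sin (s*eta*r) * (4*eta)) / (4*PI*r*D^2)) <= 3 / D).
        { apply divbnd; try lra.
          replace (cos (s*eta*r) * (s*r) * D - sin (s*eta*r) * (4*eta))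
            with ((cos (s*eta*r) * s) * r * D - sin (s*eta*r) * (4*eta)) by ring.
          replace 3 with (1 + 2) by ring. apply comb with (c2 := eta); try lra.
          rewrite Rabs_mult, Hs; lra. }
        assert (6 / D + 3 / D <= 10 * (1 / D)).
        { unfold Rdiv. assert (0 < / D) by (apply Rinv_0_lt_compat; lra). lra. }
        lra.
Qed.
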